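(* Let $n$ be even. The map $\mathrm{Sm}(v_0,\dots,v_n)=2^{-(n+1)}\sum_{\sigma_0,\dots,\sigma_n\in\{\pm1\}}S(\sigma_0v_0,\dots,\sigma_nv_n)$ descends to a map $(\mathbb{P}(\mathbb{R}^n))^{n+1}\to\mathbb{R}_\varepsilon$ which is $\mathrm{GL}_n(\mathbb{R})$-equivariant (i.e. $\mathrm{Sm}(gv_0,\dots,gv_n)=\operatorname{sign}(\det g)\mathrm{Sm}(v_0,\dots,v_n)$), and its coboundary $d\,\mathrm{Sm}$ vanishes on all hereditarily spanning $(n+2)$-tuples.
   Context: $\mathrm{Or}(v_1,\dots,v_n)=\operatorname{sign}\det(v_1,\dots,v_n)$ (zero if not a basis). $S:(\mathbb{R}^n)^{n+1}\to\{-1,0,1\}$ is defined by $S(v_0,\dots,v_n)=0$ if $0$ is not in the interior of the convex hull of $v_0,\dots,v_n$, and otherwise $S(v_0,\dots,v_n)=(-1)^i\mathrm{Or}(v_0,\dots,\widehat{v_i},\dots,v_n)$ for any $i$ (independent of $i$). $\mathbb{R}_\varepsilon$ is $\mathbb{R}$ with $g$ acting by $\operatorname{sign}\det g$. A tuple is hereditarily spanning if any $n$ of its entries span $\mathbb{R}^n$. $d$ is the alternating sum of omissions of variables. *)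

(* Defs.v *)
(* Vectors of R^n are column vectors 'cV[R]_n over an
   arbitrary real field R (the paper uses R = the reals). *)
From HB Require Import structures.
From mathcomp Require Import all_boot all_order all_algebra.
From Stdlib Require Import ClassicalEpsilon.
Set Implicit Arguments. Unset Strict Implicit. Unset Printing Implicit Defensive.
Import Order.TTheory GRing.Theory Num.Theory.
Local Open Scope ring_scope.

Section Defs.
Variable R : realFieldType.

Definition omit (T : Type) (k : nat) (i : 'I_k.+1) (v : 'I_k.+1 -> T) : 'I_k -> T :=
  fun j => v (lift i j).

Definition Or (n : nat) (w : 'I_n -> 'cV[R]_n) : R :=
  Num.sg (\det (\matrix_(i < n, j < n) w j i 0)).

Definition in_conv (n k : nat) (v : 'I_k -> 'cV[R]_n) (x : 'cV[R]_n) : Prop :=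
  exists l : 'I_k -> R,
    (forall i, 0 <= l i) /\ \sum_(i < k) l i = 1 /\ x = \sum_(i < k) l i *: v i.

(* x lies in the (topological) interior of the convex hull; the topology of
   R^n is the product (sup-norm) topology *)
Definition in_interior_conv (n k : nat) (v : 'I_k -> 'cV[R]_n) (x : 'cV[R]_n) : Prop :=
  exists e : R, 0 < e /\
    forall y : 'cV[R]_n, (forall i, `|y i 0 - x i 0| < e) -> in_conv v y.

(* S(v_0,...,v_n) = 0 if 0 is not in the interior of the convex hull,
   otherwise (-1)^0 Or(v_1,...,v_n) (the choice i = 0). *)
Definition Ssimp (n : nat) (v : 'I_n.+1 -> 'cV[R]_n) : R :=
  if excluded_middle_informative (in_interior_conv v 0) then Or (omit ord0 v)
  else 0.

Definition Sm (n : nat) (v : 'I_n.+1 -> 'cV[R]_n) : R :=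
  (2 ^+ n.+1)^-1 *
  \sum_(s : {ffun 'I_n.+1 -> bool}) Ssimp (fun i => (if s i then -1 else 1) *: v i).

Definition hereditarily_spanning (n k : nat) (v : 'I_k -> 'cV[R]_n) : Prop :=
  forall f : 'I_n -> 'I_k, injective f ->
    row_full (\matrix_(i < n) (v (f i))^T).

Definition cobound (n k : nat) (F : ('I_k -> 'cV[R]_n) -> R)
    (v : 'I_k.+1 -> 'cV[R]_n) : R :=
  \sum_(i < k.+1) (-1) ^+ i * F (omit i v).
End Defs.

(* Main.v *)
Require Import Defs.
From HB Require Import structures.
From mathcomp Require Import all_boot all_order all_algebra.
From Stdlib Require Import ClassicalEpsilon FunctionalExtensionality Lia.
Set Implicit Arguments. Unset Strict Implicit. Unset Printing Implicit Defensive.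
Import Order.TTheory GRing.Theory Num.Theory.
Local Open Scope ring_scope.

Section Aux.
Variable R : realFieldType.

Lemma conv_le1 k (l : 'I_k -> R) i : (forall j, 0 <= l j) -> \sum_j l j = 1 -> l i <= 1.
Proof.
move=> l0 s1; rewrite -s1 (bigD1 i) //= lerDl; exact: sumr_ge0.
Qed.

Lemma conv_norm n k (u : 'I_k -> 'cV[R]_n) (a : 'I_k -> R) :
  (forall j, 0 <= a j) -> 0 < \sum_j a j ->
  in_conv u ((\sum_j a j)^-1 *: \sum_j a j *: u j).
Proof.
move=> a0 sp; exists (fun j => (\sum_j a j)^-1 * a j); split.
  by move=> j; rewrite mulr_ge0 // invr_ge0 ltW.
split; first by rewrite -mulr_sumr mulVf // gt_eqF.
by rewrite scaler_sumr; apply: eq_bigr => j _; rewrite scalerA.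
Qed.

Lemma cone_conv n k (u : 'I_k -> 'cV[R]_n) (a : 'I_k -> R) :
  in_conv u 0 -> (forall j, 0 <= a j) -> \sum_j a j <= 1 ->
  in_conv u (\sum_j a j *: u j).
Proof.
case=> l0 [l00 [l01 l0e]] a0 s1.
exists (fun j => a j + (1 - \sum_j a j) * l0 j); split.
  by move=> j; rewrite addr_ge0 // mulr_ge0 // subr_ge0.
split; first by rewrite big_split /= -mulr_sumr l01 mulr1 addrC subrK.
under [RHS]eq_bigr => j _ do rewrite scalerDl -scalerA.
by rewrite big_split /= -scaler_sumr -l0e scaler0 addr0.
Qed.


Definition mxN n (B : 'M[R]_n) := \sum_i \sum_j `|B i j|.

Lemma mxN_ge0 n (B : 'M[R]_n) : 0 <= mxN B.
Proof. by apply: sumr_ge0 => i _; apply: sumr_ge0. Qed.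

Lemma mul_bound n (B : 'M[R]_n) (y : 'cV[R]_n) (e : R) :
  (forall j, `|y j 0| <= e) -> forall i, `|(B *m y) i 0| <= mxN B * e.
Proof.
move=> ye i; rewrite mxE; apply: le_trans (ler_norm_sum _ _ _) _.
have e0 : 0 <= e := le_trans (normr_ge0 (y i 0)) (ye i).
apply: le_trans (_ : \sum_j `|B i j| * e <= _).
  by apply: ler_sum => j _; rewrite normrM ler_wpM2l.
rewrite -mulr_suml ler_wpM2r //.
rewrite /mxN [X in _ <= X](bigD1 i) //= lerDl.
by apply: sumr_ge0 => ? _; exact: sumr_ge0.
Qed.

Lemma zero_entry n (i : 'I_n) : (0 : 'cV[R]_n) i 0 = 0.
Proof. by rewrite mxE. Qed.

Lemma interior_lin n k (v : 'I_k -> 'cV[R]_n) (A : 'M[R]_n) :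
  A \in unitmx -> in_interior_conv v 0 -> in_interior_conv (fun i => A *m v i) 0.
Proof.
move=> Au [e [e0 He]].
set B := invmx A; set N := mxN B + 1.
have N0 : 0 < N by rewrite ltr_wpDl ?mxN_ge0 // ltr01.
exists (e / N); split; first by rewrite divr_gt0.
move=> y hy.
have : in_conv v (B *m y).
  apply: He => i; rewrite zero_entry subr0.
  apply: le_lt_trans (@mul_bound n B y (e / N) _ i) _.
    by move=> j; have := hy j; rewrite zero_entry subr0 => /ltW.
  rewrite -[X in _ < X](mulfVK (negbT (gt_eqF N0))) [X in _ < X]mulrC ltr_pM2r ?divr_gt0 //.
  by rewrite /N ltrDl ltr01.
case=> l [l0 [l1 le]]; exists l; do 2!split => //.
by rewrite -[y](mulKVmx Au) -/B le mulmx_sumr; apply: eq_bigr => i _; rewrite scalemxAr.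
Qed.

Lemma interior_pos n k (v : 'I_k -> 'cV[R]_n) (c : 'I_k -> R) :
  (forall i, 0 < c i) -> in_interior_conv v 0 ->
  in_interior_conv (fun i => c i *: v i) 0.
Proof.
move=> c0 [e [e0 He]].
have [l0 [l00 [l01 l0e]]] : in_conv v 0.
  by apply: He => i; rewrite zero_entry subrr normr0.
have cK j : (c j)^-1 * c j = 1 by rewrite mulVf // gt_eqF.
have conv0 : in_conv (fun i => c i *: v i) 0.
  have hge j : 0 <= l0 j * (c j)^-1 by rewrite mulr_ge0 // invr_ge0 ltW.
  have s0 : 0 < \sum_j l0 j * (c j)^-1.
    rewrite lt_def sumr_ge0 ?andbT //.
    apply/negP => /eqP /(psumr_eq0P (fun j _ => hge j)) H.
    have : \sum_j l0 j = 0.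
      apply: big1 => j _; have := H j isT.
      by move/eqP; rewrite mulf_eq0 invr_eq0 (gt_eqF (c0 j)) orbF => /eqP.
    by move=> h; move: (oner_neq0 R); rewrite -l01 h eqxx.
  have := @conv_norm n k (fun i => c i *: v i) (fun j => l0 j * (c j)^-1) hge s0.
  rewrite (eq_bigr (fun j => l0 j *: v j)); last first.
    by move=> j _; rewrite scalerA -mulrA cK mulr1.
  by rewrite -l0e scaler0.
set K := 1 + \sum_j (c j)^-1.
have K0 : 0 < K by rewrite ltr_wpDr ?ltr01 // sumr_ge0 // => j _; rewrite invr_ge0 ltW.
exists (e / K); split; first by rewrite divr_gt0.
move=> y hy.
have [l [l0' [l1 le]]] : in_conv v (K *: y).
  apply: He => i; rewrite zero_entry subr0 mxE normrM gtr0_norm //.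
  have := hy i; rewrite zero_entry subr0 => hyi.
  by rewrite -[e](mulfVK (negbT (gt_eqF K0))) mulrC ltr_pM2r.
have -> : y = \sum_j (K^-1 * (l j * (c j)^-1)) *: (c j *: v j).
  rewrite (eq_bigr (fun j => K^-1 *: (l j *: v j))); last first.
    by move=> j _; rewrite scalerA -!mulrA cK mulr1 scalerA.
  by rewrite -scaler_sumr -le scalerA mulVf ?scale1r // gt_eqF.
apply: cone_conv => //.
  by move=> j; rewrite !mulr_ge0 // invr_ge0 ltW.
rewrite -mulr_sumr ler_pdivrMl // mulr1 /K ler_wpDl // ler_sum // => j _.
by apply: ler_piMl; [rewrite invr_ge0 ltW | exact: conv_le1].
Qed.

Definition Mat n (u : 'I_n -> 'cV[R]_n) : 'M[R]_n := \matrix_(i < n, j < n) u j i 0.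

Lemma OrE n (u : 'I_n -> 'cV[R]_n) : Or u = Num.sg (\det (Mat u)).
Proof. by []. Qed.

Lemma Mat_lin n (g : 'M[R]_n) u : Mat (fun j => g *m u j) = g *m Mat u.
Proof. by apply/matrixP => i j; rewrite !mxE; apply: eq_bigr => k _; rewrite !mxE. Qed.

Lemma Mat_scale n (c : 'I_n -> R) u :
  Mat (fun j => c j *: u j) = Mat u *m diag_mx (\row_j c j).
Proof. by apply/matrixP => i j; rewrite mul_mx_diag !mxE mulrC. Qed.

Lemma det_Mat_scale n (c : 'I_n -> R) u :
  \det (Mat (fun j => c j *: u j)) = \det (Mat u) * \prod_j c j.
Proof.
rewrite Mat_scale det_mulmx det_diag; congr (_ * _).
by apply: eq_bigr => j _; rewrite mxE.
Qed.

Lemma Or_lin n (g : 'M[R]_n) u : Or (fun j => g *m u j) = Num.sg (\det g) * Or u.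
Proof. by rewrite !OrE Mat_lin det_mulmx sgrM. Qed.

Lemma Or_pos n (c : 'I_n -> R) u : (forall j, 0 < c j) -> Or (fun j => c j *: u j) = Or u.
Proof.
move=> c0; rewrite !OrE det_Mat_scale sgrM.
by rewrite (gtr0_sg (prodr_gt0 _ (fun j _ => c0 j))) mulr1.
Qed.

Lemma Ssimp_lin n (g : 'M[R]_n) (v : 'I_n.+1 -> 'cV[R]_n) : g \in unitmx ->
  Ssimp (fun i => g *m v i) = Num.sg (\det g) * Ssimp v.
Proof.
move=> gu; rewrite /Ssimp.
case: excluded_middle_informative => h1; case: excluded_middle_informative => h2.
- exact: Or_lin.
- case: h2; have gi : invmx g \in unitmx by rewrite unitmx_inv.
  have := @interior_lin _ _ _ (invmx g) gi h1.
  by congr in_interior_conv; apply: functional_extensionality => i; rewrite mulKmx.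
- by case: h1; exact: interior_lin.
- by rewrite mulr0.
Qed.

Lemma Ssimp_pos n (c : 'I_n.+1 -> R) (v : 'I_n.+1 -> 'cV[R]_n) : (forall i, 0 < c i) ->
  Ssimp (fun i => c i *: v i) = Ssimp v.
Proof.
move=> c0; rewrite /Ssimp.
case: excluded_middle_informative => h1; case: excluded_middle_informative => h2 //.
- exact: Or_pos.
- case: h2; have := interior_pos (c := fun i => (c i)^-1) _ h1.
  have -> : (fun i => (c i)^-1 *: (c i *: v i)) = v.
    by apply: functional_extensionality => i; rewrite scalerA mulVf ?scale1r // gt_eqF.
  by apply => i; rewrite invr_gt0.
- by case: h1; exact: interior_pos.
Qed.

Lemma Sm_lin n (g : 'M[R]_n) (v : 'I_n.+1 -> 'cV[R]_n) : g \in unitmx ->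
  Sm (fun i => g *m v i) = Num.sg (\det g) * Sm v.
Proof.
move=> gu; rewrite /Sm mulrCA; congr (_ * _); rewrite mulr_sumr.
apply: eq_bigr => s _; rewrite -Ssimp_lin //; congr Ssimp.
by apply: functional_extensionality => i; rewrite scalemxAr.
Qed.

Lemma Sm_scale n (v : 'I_n.+1 -> 'cV[R]_n) (c : 'I_n.+1 -> R) :
  (forall i, c i != 0) -> Sm (fun i => c i *: v i) = Sm v.
Proof.
move=> c0.
pose h := fun s : {ffun 'I_n.+1 -> bool} => [ffun i => s i (+) (c i < 0)].
have hK : involutive h by move=> s; apply/ffunP => i; rewrite !ffunE addbK.
rewrite /Sm; congr (_ * _); rewrite [RHS](reindex_inj (inv_inj hK)).
apply: eq_bigr => s _.
rewrite -[RHS](@Ssimp_pos _ (fun i => `|c i|)); last by move=> i; rewrite normr_gt0.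
congr Ssimp; apply: functional_extensionality => i; rewrite ffunE !scalerA.
congr (_ *: _); have := c0 i; case: (ltgtP (c i) 0) => // ci _.
  by rewrite ltr0_norm //; case: (s i) => /=; rewrite ?mulN1r ?mul1r ?mulrN1 ?mulr1 ?opprK.
by rewrite gtr0_norm //; case: (s i) => /=; rewrite ?mulN1r ?mul1r ?mulrN1 ?mulr1.
Qed.

Definition dd n (w : 'I_n.+1 -> 'cV[R]_n) (k : 'I_n.+1) : R :=
  (-1) ^+ k * \det (Mat (omit k w)).

Lemma cramer n (w : 'I_n.+1 -> 'cV[R]_n) : \sum_k dd w k *: w k = 0.
Proof.
apply/matrixP => r z; rewrite (ord1 z) summxE zero_entry.
pose M := \matrix_(a < n.+1, k < n.+1)
  (if unlift ord0 a is Some a' then w k a' 0 else w k r 0).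
have M0 : \det M = 0.
  apply: (@determinant_alternate _ _ M ord0 (lift ord0 r)).
    by rewrite neq_lift.
  by move=> k; rewrite !mxE unlift_none liftK.
rewrite -[X in _ = X]M0 (expand_det_row M ord0); apply: eq_bigr => k _.
rewrite mxE [M ord0 k]mxE unlift_none /cofactor add0n mulrC /dd; congr (_ * (_ * \det _)).
by apply/matrixP => a b; rewrite !mxE liftK.
Qed.

Lemma indep_of_det n (u : 'I_n -> 'cV[R]_n) (x : 'I_n -> R) :
  \det (Mat u) != 0 -> \sum_j x j *: u j = 0 -> forall j, x j = 0.
Proof.
move=> du hx j.
have Mu : Mat u \in unitmx by rewrite unitmxE unitfE.
pose X := \col_j x j.
have MX : Mat u *m X = 0.
  apply/matrixP => i z; rewrite (ord1 z) -hx mxE summxE.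
  by apply: eq_bigr => k _; rewrite !mxE mulrC.
have : X = 0 by rewrite -(mulKmx Mu X) MX mulmx0.
by move/matrixP => /(_ j 0); rewrite !mxE.
Qed.

Lemma rel_unique n (w : 'I_n.+1 -> 'cV[R]_n) (rho : 'I_n.+1 -> R) :
  \det (Mat (omit ord0 w)) != 0 -> \sum_k rho k *: w k = 0 ->
  forall k, rho k = rho ord0 / dd w ord0 * dd w k.
Proof.
move=> d0 hr.
have dd0 : dd w ord0 != 0 by rewrite /dd expr0 mul1r.
pose x k := rho k - rho ord0 / dd w ord0 * dd w k.
have hx : \sum_k x k *: w k = 0.
  under eq_bigr => k _ do rewrite /x scalerBl -scalerA.
  by rewrite sumrB hr -scaler_sumr cramer scaler0 subr0.
have x0 : x ord0 = 0 by rewrite /x divfK // subrr.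
move: hx; rewrite big_ord_recl x0 scale0r add0r => hx.
have := indep_of_det d0 hx => hx' k.
apply/eqP; rewrite -subr_eq0; apply/eqP.
case: (unliftP ord0 k) => [j ->|->]; first exact: hx'.
exact: x0.
Qed.

Lemma lerNnorm (x : R) : - `|x| <= x.
Proof. by rewrite lerNl -normrN ler_norm. Qed.

Lemma interior_of_signs n (w : 'I_n.+1 -> 'cV[R]_n) :
  (forall k, \det (Mat (omit k w)) != 0) ->
  (forall k, Num.sg (dd w k) = Num.sg (dd w ord0)) -> in_interior_conv w 0.
Proof.
move=> Hd Hs.
have ddn k : dd w k != 0 by apply: mulf_neq0; [rewrite signr_eq0 | exact: Hd].
set sig := Num.sg (dd w ord0).
have nd k : `|dd w k| = sig * dd w k by rewrite normrEsg Hs.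
set S := \sum_j `|dd w j|.
have S0 : 0 < S.
  rewrite /S (bigD1 ord0) //= ltr_wpDr ?normr_gt0 ?ddn //.
  by apply: sumr_ge0 => j _.
pose del k := `|dd w k| / S.
have del0 k : 0 < del k by rewrite divr_gt0 ?normr_gt0.
have delS : \sum_k del k = 1 by rewrite -mulr_suml mulfV ?gt_eqF.
have delw : \sum_k del k *: w k = 0.
  under eq_bigr => k _ do rewrite /del nd mulrC -2!scalerA.
  by rewrite -scaler_sumr -scaler_sumr cramer !scaler0.
have del1 k : del k <= 1 by apply: conv_le1 => // j; exact: ltW.
set P := \prod_k del k.
have P0 : 0 < P by apply: prodr_gt0 => k _.
have Pd k : P <= del k.
  rewrite /P (bigD1 k) //=; apply: ler_piMr; first exact: ltW.
  by apply: prodr_ile1 => j _; rewrite del1 ltW.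
set W := Mat (omit ord0 w).
have Wu : W \in unitmx by rewrite unitmxE unitfE; exact: Hd.
set A := invmx W.
set N := mxN A + 1.
have N0 : 0 < N by rewrite ltr_wpDl ?mxN_ge0 // ltr01.
set e := P / (n.+1%:R * N).
have e0 : 0 < e by rewrite divr_gt0 // mulr_gt0 // ltr0n.
exists e; split => // y hy.
pose b := A *m y.
have hb j : `|b j 0| <= N * e.
  apply: le_trans (@mul_bound n A y e _ j) _.
    by move=> i; have := hy i; rewrite zero_entry subr0 => /ltW.
  by rewrite ler_wpM2r ?(ltW e0) // /N lerDl ler01.
set sb := \sum_j b j 0.
have hsb : `|sb| <= n%:R * (N * e).
  apply: le_trans (ler_norm_sum _ _ _) _.
  apply: le_trans (ler_sum _ (fun j _ => hb j)) _.
  by rewrite sumr_const card_ord mulr_natl.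
pose b' k := if unlift ord0 k is Some j then b j 0 else 0.
have hb' k : `|b' k| <= N * e.
  rewrite /b'; case: (unlift ord0 k) => [j|]; first exact: hb.
  by rewrite normr0 mulr_ge0 ?ltW.
have sb' : \sum_k b' k = sb.
  by rewrite big_ord_recl /b' unlift_none add0r; apply: eq_bigr => j _; rewrite liftK.
have NeP : (n.+1)%:R * (N * e) = P.
  by rewrite /e mulrA mulrCA mulfV ?mulr1 // mulf_neq0 ?gt_eqF ?ltr0n.
exists (fun k => del k * (1 - sb) + b' k); split.
  move=> k.
  have h1 : del k - `|sb| <= del k * (1 - sb).
    rewrite mulrBr mulr1 lerD2l lerN2.
    apply: le_trans (ler_norm (del k * sb)) _.
    rewrite normrM (ger0_norm (ltW (del0 k))); exact: ler_piMl.
  apply: le_trans (lerD h1 (lerNnorm (b' k))).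
  rewrite -addrA -opprD subr_ge0; apply: le_trans _ (Pd k).
  rewrite -NeP -addn1 natrD mulrDl mul1r; exact: lerD.
split.
  by rewrite big_split /= -mulr_suml delS mul1r sb' subrK.
under eq_bigr => k _ do rewrite scalerDl mulrC -scalerA.
rewrite big_split /= -scaler_sumr delw scaler0 add0r.
rewrite big_ord_recl /b' unlift_none scale0r add0r.
rewrite -[y](mulKVmx Wu) -/A -/b; apply/matrixP => i z; rewrite (ord1 z) mxE summxE.
by apply: eq_bigr => j _; rewrite liftK !mxE mulrC.
Qed.

Lemma Ssimp_val n (w : 'I_n.+1 -> 'cV[R]_n) :
  (forall k, \det (Mat (omit k w)) != 0) ->
  Ssimp w = if [forall k, Num.sg (dd w k) == Num.sg (dd w ord0)]
            then Num.sg (dd w ord0) else 0.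
Proof.
move=> Hd.
have ddn k : dd w k != 0 by apply: mulf_neq0; [rewrite signr_eq0 | exact: Hd].
have Or0 : Or (omit ord0 w) = Num.sg (dd w ord0) by rewrite OrE /dd expr0 mul1r.
rewrite /Ssimp; case: excluded_middle_informative => hI; last first.
  case: ifP => // /forallP H; case: hI; apply: interior_of_signs => // k.
  exact/eqP.
rewrite /=; case: ifP => [_|/negP H]; first exact: Or0.
exfalso; apply: H; apply/forallP => k; apply/eqP.
have [mu [mu0 [mu1 mue]]] : in_conv w 0.
  by case: hI => e [e0 He]; apply: He => i; rewrite zero_entry subrr normr0.
have hr := rel_unique (Hd ord0) (esym mue).
set t := mu ord0 / dd w ord0 in hr.
have t0 : t != 0.
  apply/eqP => t0; move: mu1; rewrite big1 => [|j _]; last by rewrite hr t0 mul0r.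
  by move/eqP; rewrite eq_sym oner_eq0.
have pos j : Num.sg t * Num.sg (dd w j) = 1.
  rewrite -sgrM -hr gtr0_sg // lt_def mu0 andbT hr; exact: mulf_neq0.
have st0 : Num.sg t != 0 by rewrite sgr_eq0.
by apply: (mulfI st0); rewrite !pos.
Qed.

Lemma bump_lt_self i k : (bump i k < i)%N = (k < i)%N.
Proof.
rewrite /bump; case: (leqP i k) => h /=.
  by rewrite add1n ltnNge (leqW h).
by rewrite add0n h.
Qed.

Lemma lift_lift2 N (i j : 'I_N.+2) (k k' : 'I_N.+1) (a : 'I_N) :
  lift i k = j -> lift j k' = i -> lift i (lift k a) = lift j (lift k' a).
Proof.
move=> hk hk'; apply: val_inj => /=.
rewrite bumpC; have -> : bump i k = j by rewrite -hk.
congr (bump _ (bump _ _)).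
have e1 : unbump j i = k' by rewrite -hk' /= bumpK.
by rewrite -e1 /unbump -hk /= bump_lt_self.
Qed.

Lemma odd_lift2 N (i j : 'I_N.+2) (k k' : 'I_N.+1) :
  lift i k = j -> lift j k' = i -> odd (i + k + (j + k')).
Proof.
move=> hk hk'.
have ej : (j : nat) = ((i <= k) + k)%N by rewrite -hk.
have ei : (i : nat) = ((j <= k') + k')%N by rewrite -hk'.
suff -> : (i + k + (j + k') = (k + k').*2.+1)%N by rewrite /= odd_double.
move: ej ei; case: (leqP i k) => h1; case: (leqP j k') => h2 /= ej ei;
  move: h1 h2; rewrite ej ei -!mul2n -!plusE -!multE => /ssrnat.leP h1 /ssrnat.leP h2; lia.
Qed.

Lemma signr_sq (m : nat) : (-1) ^+ m * (-1) ^+ m = 1 :> R.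
Proof. by rewrite -exprD -signr_odd oddD addbb. Qed.

Lemma sg_sign (m : nat) : Num.sg ((-1) ^+ m : R) = (-1) ^+ m.
Proof. by rewrite -signr_odd; case: (odd m); rewrite ?expr1 ?expr0 ?sgrN1 ?sgr1. Qed.

Definition FF n (v : 'I_n.+2 -> 'cV[R]_n) (i j : 'I_n.+2) : R :=
  if unlift i j is Some k then (-1) ^+ i * dd (omit i v) k else 0.

Lemma FF_lift n (v : 'I_n.+2 -> 'cV[R]_n) i k : FF v i (lift i k) = (-1) ^+ i * dd (omit i v) k.
Proof. by rewrite /FF liftK. Qed.

Lemma FF_diag n (v : 'I_n.+2 -> 'cV[R]_n) i : FF v i i = 0.
Proof. by rewrite /FF unlift_none. Qed.

Lemma FF_anti n (v : 'I_n.+2 -> 'cV[R]_n) i j : FF v i j = - FF v j i.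
Proof.
case: (unliftP i j) => [k ek|->]; last by rewrite FF_diag oppr0.
case: (unliftP j i) => [k' ek'|ei]; last by move: (neq_lift i k); rewrite -ek ei eqxx.
rewrite ek FF_lift -ek ek' FF_lift -ek' /dd !mulrA -!exprD.
have -> : Mat (omit k' (omit j v)) = Mat (omit k (omit i v)).
  congr Mat; apply: functional_extensionality => a.
  by rewrite /omit (@lift_lift2 n i j k k' a (esym ek) (esym ek')).
have hs : (-1) ^+ (i + k) * (-1) ^+ (j + k') = -1 :> R.
  by rewrite -exprD -signr_odd odd_lift2 ?expr1 // -?ek -?ek'.
have e : (-1) ^+ (i + k) = - (-1) ^+ (j + k') :> R.
  move: hs (signr_sq (j + k')); move: ((-1) ^+ (i + k)) ((-1) ^+ (j + k')) => x y xy yy.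
  by rewrite -[x]mulr1 -yy mulrA xy mulN1r.
by rewrite e mulNr.
Qed.

Lemma FF_rel n (v : 'I_n.+2 -> 'cV[R]_n) i : \sum_j FF v i j *: v j = 0.
Proof.
rewrite (bigD1_ord i) //= FF_diag scale0r add0r.
under eq_bigr => k _ do rewrite FF_lift -scalerA.
by rewrite -scaler_sumr (cramer (omit i v)) scaler0.
Qed.

Lemma FF_uniq n (v : 'I_n.+2 -> 'cV[R]_n) (rho : 'I_n.+2 -> R) i m :
  (forall i (k : 'I_n.+1), \det (Mat (omit k (omit i v))) != 0) ->
  i != m -> rho i = 0 -> rho m = 0 -> \sum_j rho j *: v j = 0 -> forall l, rho l = 0.
Proof.
move=> HD im ri rm hr.
case: (unliftP i m) => [m' em|ei]; last by move: im; rewrite ei eqxx.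
move: hr; rewrite (bigD1_ord i) //= ri scale0r add0r.
rewrite (bigD1_ord m') //= -em rm scale0r add0r => hr.
have := indep_of_det (HD i m') hr => hx l.
case: (unliftP i l) => [k ->|->] //.
case: (unliftP m' k) => [a ->|->]; last by rewrite -em.
exact: hx.
Qed.

Lemma FF_nz n (v : 'I_n.+2 -> 'cV[R]_n) i j :
  (forall i (k : 'I_n.+1), \det (Mat (omit k (omit i v))) != 0) ->
  i != j -> FF v i j != 0.
Proof.
move=> HD ij; case: (unliftP i j) => [k ->|ei]; last by move: ij; rewrite ei eqxx.
rewrite FF_lift; apply: mulf_neq0; first by rewrite signr_eq0.
by apply: mulf_neq0; [rewrite signr_eq0 | exact: HD].
Qed.

Lemma FF_GP n (v : 'I_n.+2 -> 'cV[R]_n) i m j l :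
  (forall i (k : 'I_n.+1), \det (Mat (omit k (omit i v))) != 0) ->
  FF v i m * FF v j l = FF v j m * FF v i l + FF v i j * FF v m l.
Proof.
move=> HD.
have [->|im] := eqVneq i m.
  by rewrite FF_diag mul0r (FF_anti v m j) mulNr addrN.
pose rho x := FF v i m * FF v j x - FF v j m * FF v i x - FF v i j * FF v m x.
have hr : \sum_x rho x *: v x = 0.
  under eq_bigr => x _ do rewrite /rho !scalerBl -!scalerA.
  by rewrite !sumrB -!scaler_sumr !FF_rel !scaler0 !subr0.
have ri : rho i = 0.
  rewrite /rho FF_diag mulr0 subr0 (FF_anti v j i) (FF_anti v m i) !mulrN opprK.
  by rewrite [FF v i j * _]mulrC addNr.
have rm : rho m = 0 by rewrite /rho FF_diag mulr0 subr0 mulrC subrr.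
have := FF_uniq HD im ri rm hr l; rewrite /rho => /eqP.
by rewrite subr_eq0 subr_eq addrC => /eqP.
Qed.

Section Tourn.
Variables (N : nat) (G : 'I_N.+2 -> 'I_N.+2 -> R).
Hypothesis Ga : forall i j, G i j = - G j i.
Hypothesis Gnz : forall i j, i != j -> G i j != 0.
Hypothesis GP : forall i m j l, G i m * G j l = G j m * G i l + G i j * G m l.

Definition src i := [forall j, (j != i) ==> (0 < G i j)].
Definition snk i := [forall j, (j != i) ==> (G i j < 0)].

Lemma src_snk i : src i -> exists k, snk k.
Proof.
move=> /forallP hs.
have hs' j : j != i -> 0 < G i j by move=> ji; exact: (implyP (hs j)).
set mm := lift i ord0.
have mmi : mm != i by rewrite eq_sym neq_lift.
have c0 : 0 < G i mm := hs' mm mmi.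
pose key l := G l mm / G i l.
have Pmm : (fun l => l != i) mm by [].
case: (@arg_minP _ R _ mm (fun l => l != i) key Pmm) => k ki kmin.
exists k; apply/forallP => j; apply/implyP => jk.
have [->|ji] := eqVneq j i.
  by rewrite Ga oppr_lt0; apply: hs'.
have hk := kmin j ji; rewrite /key in hk.
have gik := hs' k ki; have gij := hs' j ji.
have hz : 0 < G i k * G i j by rewrite mulr_gt0.
have := hk; rewrite -(ler_pM2r hz) mulrA divfK ?gt_eqF //.
rewrite [G i k * _]mulrC mulrA divfK ?gt_eqF // => hle.
have : G i mm * G k j <= 0.
  rewrite GP (Ga mm j) mulrN subr_le0 [G i k * _]mulrC; exact: hle.
rewrite pmulr_rle0 // => kj.
by rewrite lt_neqAle kj andbT Gnz // eq_sym.
Qed.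

Lemma src_uniq i i' : src i -> src i' -> i = i'.
Proof.
move=> /forallP h1 /forallP h2; apply/eqP; apply/negPn/negP => ii.
have a : 0 < G i i' by apply: (implyP (h1 i')); rewrite eq_sym.
have b := implyP (h2 i) ii.
by move: b; rewrite Ga oppr_gt0 ltNge (ltW a).
Qed.

Lemma snk_uniq i i' : snk i -> snk i' -> i = i'.
Proof.
move=> /forallP h1 /forallP h2; apply/eqP; apply/negPn/negP => ii.
have a : G i i' < 0 by apply: (implyP (h1 i')); rewrite eq_sym.
have b := implyP (h2 i) ii.
by move: b; rewrite Ga oppr_lt0 ltNge (ltW a).
Qed.

Lemma sum_ind (P : pred 'I_N.+2) : (forall i i', P i -> P i' -> i = i') ->
  \sum_i (P i)%:R = ([exists i, P i])%:R :> R.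
Proof.
move=> hu; case: existsP => [[i0 Pi0]|hn].
  rewrite (bigD1 i0) //= Pi0 big1 ?addr0 // => j ji.
  case Pj: (P j) => //=; by move: ji; rewrite (hu _ _ Pj Pi0) eqxx.
by rewrite big1 // => j _; case Pj: (P j) => //; case: hn; exists j.
Qed.

Lemma T_val i : (if [forall k, Num.sg (G i (lift i k)) == Num.sg (G i (lift i ord0))]
  then Num.sg (G i (lift i ord0)) else 0) = (src i)%:R - (snk i)%:R.
Proof.
set i0 := lift i ord0.
have i0i : i0 != i by rewrite eq_sym neq_lift.
have ne k : lift i k != i by rewrite eq_sym neq_lift.
have [neg|pos|z] := ltgtP (G i i0) 0; last by move: (Gnz i0i); rewrite Ga z oppr0 eqxx.
- have nsrc : src i = false.
    by apply/negbTE/negP => /forallP/(_ i0); rewrite i0i /= ltNge (ltW neg).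
  rewrite nsrc (ltr0_sg neg) /=.
  case: ifP => hf.
    have -> : snk i.
      apply/forallP => j; apply/implyP => ji; case: (unliftP i j) ji => [k ->|->]; last by rewrite eqxx.
      move=> _; move/forallP: hf => /(_ k).
      by rewrite (sgr_cp0 (G i (lift i k))).1.2.
    by rewrite add0r.
  have -> : snk i = false.
    apply/negbTE/negP => /forallP hs; move/negP: hf; apply; apply/forallP => k.
    rewrite (sgr_cp0 _).1.2; exact: (implyP (hs _) (ne k)).
  by rewrite subrr.
- have nsnk : snk i = false.
    by apply/negbTE/negP => /forallP/(_ i0); rewrite i0i /= ltNge (ltW pos).
  rewrite nsnk (gtr0_sg pos) /= subr0.
  case: ifP => hf.
    have -> : src i.
      apply/forallP => j; apply/implyP => ji; case: (unliftP i j) ji => [k ->|->]; last by rewrite eqxx.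
      move=> _; move/forallP: hf => /(_ k).
      by rewrite (sgr_cp0 (G i (lift i k))).1.1.
    by [].
  have -> : src i = false.
    apply/negbTE/negP => /forallP hs; move/negP: hf; apply; apply/forallP => k.
    rewrite (sgr_cp0 _).1.1; exact: (implyP (hs _) (ne k)).
  by [].
Qed.
End Tourn.

Lemma tourn_sum N (G : 'I_N.+2 -> 'I_N.+2 -> R)
  (Ga : forall i j, G i j = - G j i)
  (Gnz : forall i j, i != j -> G i j != 0)
  (GP : forall i m j l, G i m * G j l = G j m * G i l + G i j * G m l) :
  \sum_i (if [forall k, Num.sg (G i (lift i k)) == Num.sg (G i (lift i ord0))]
    then Num.sg (G i (lift i ord0)) else 0) = 0.
Proof.
under eq_bigr => i _ do rewrite (T_val Ga Gnz).
have su := src_uniq Ga; have ku := snk_uniq Ga.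
rewrite sumrB !sum_ind //.
suff -> : [exists i, snk G i] = [exists i, src G i] by rewrite subrr.
apply/idP/idP => /existsP [i hi]; apply/existsP; last first.
  exact: (src_snk Ga Gnz GP hi).
pose G' i j := - G i j.
have Ga' a b : G' a b = - G' b a by rewrite /G' Ga.
have Gnz' a b : a != b -> G' a b != 0 by move=> ab; rewrite oppr_eq0 Gnz.
have GP' a m j l : G' a m * G' j l = G' j m * G' a l + G' a j * G' m l.
  by rewrite /G' !mulrNN GP.
have hi' : src G' i.
  apply/forallP => j; apply/implyP => ji; rewrite /G' oppr_gt0.
  exact: (implyP ((forallP hi) j) ji).
have [k hk] := src_snk Ga' Gnz' GP' hi'.
exists k; apply/forallP => j; apply/implyP => jk.
have := implyP ((forallP hk) j) jk.
by rewrite /G' oppr_lt0.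
Qed.

Lemma sign_eqmul (m : nat) (a b : R) : ((-1) ^+ m * a == (-1) ^+ m * b) = (a == b).
Proof. by rewrite -subr_eq0 -mulrBr mulf_eq0 signr_eq0 subr_eq0. Qed.

Lemma dS_zero n (v : 'I_n.+2 -> 'cV[R]_n) :
  (forall i (k : 'I_n.+1), \det (Mat (omit k (omit i v))) != 0) ->
  \sum_(i < n.+2) (-1) ^+ i * Ssimp (omit i v) = 0.
Proof.
move=> HD.
rewrite -[X in _ = X](@tourn_sum n (FF v) (@FF_anti n v) (fun i j => @FF_nz n v i j HD)
           (fun i m j l => @FF_GP n v i m j l HD)).
apply: eq_bigr => i _.
rewrite (Ssimp_val (HD i)).
have e k : Num.sg (FF v i (lift i k)) = (-1) ^+ i * Num.sg (dd (omit i v) k).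
  by rewrite FF_lift sgrM sg_sign.
have -> : [forall k, Num.sg (FF v i (lift i k)) == Num.sg (FF v i (lift i ord0))] = [forall k, Num.sg (dd (omit i v) k) == Num.sg (dd (omit i v) ord0)].
  by apply: eq_forallb => k; rewrite !e sign_eqmul.
by case: ifP; rewrite ?mulr0 // e.
Qed.

Lemma hs_HD n (v : 'I_n.+2 -> 'cV[R]_n) : hereditarily_spanning v ->
  forall i (k : 'I_n.+1), \det (Mat (omit k (omit i v))) != 0.
Proof.
move=> H i k.
have finj : injective (fun a => lift i (lift k a)).
  by move=> a b /lift_inj /lift_inj.
have := H _ finj; rewrite row_full_unit unitmxE unitfE.
have -> : \matrix_(a < n) (v (lift i (lift k a)))^T = (Mat (omit k (omit i v)))^T.
  by apply/matrixP => a b; rewrite !mxE.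
by rewrite det_tr.
Qed.

Definition sgnb (b : bool) : R := if b then -1 else 1.

Lemma HD_sign n (v : 'I_n.+2 -> 'cV[R]_n) (t : 'I_n.+2 -> bool) :
  (forall i (k : 'I_n.+1), \det (Mat (omit k (omit i v))) != 0) ->
  (forall i (k : 'I_n.+1),
     \det (Mat (omit k (omit i (fun x => sgnb (t x) *: v x)))) != 0).
Proof.
move=> HD i k.
have -> : omit k (omit i (fun x => sgnb (t x) *: v x)) =
  (fun a => sgnb (t (lift i (lift k a))) *: omit k (omit i v) a) by [].
rewrite det_Mat_scale mulf_neq0 //; apply/prodf_neq0 => a _.
by rewrite /sgnb; case: (t _); rewrite ?oppr_eq0 oner_eq0.
Qed.

Lemma fiber_sum n (i : 'I_n.+2) (Gf : {ffun 'I_n.+1 -> bool} -> R) :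
  \sum_(t : {ffun 'I_n.+2 -> bool}) Gf [ffun k => t (lift i k)] = 2 * \sum_s Gf s.
Proof.
pose h (p : bool * {ffun 'I_n.+1 -> bool}) : {ffun 'I_n.+2 -> bool} :=
  [ffun x => if unlift i x is Some k then p.2 k else p.1].
pose hi (t : {ffun 'I_n.+2 -> bool}) := (t i, [ffun k => t (lift i k)]).
have hb : bijective h.
  exists hi.
    case=> b s; rewrite /hi /h ffunE unlift_none; congr (_, _).
    by apply/ffunP => k; rewrite !ffunE liftK.
  move=> t; apply/ffunP => x; rewrite /h /hi ffunE.
  by case: (unliftP i x) => [k ->|->] /=; rewrite ?ffunE.
rewrite (reindex h) /=; last exact: onW_bij.
have e p : [ffun k => h p (lift i k)] = p.2.
  by apply/ffunP => k; rewrite !ffunE liftK.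
under eq_bigr => p _ do rewrite e.
rewrite -(pair_big xpredT xpredT (fun (b : bool) s => Gf s)) /=.
by rewrite big_bool mulr_natl mulr2n.
Qed.

Lemma dSm_zero n (v : 'I_n.+2 -> 'cV[R]_n) :
  hereditarily_spanning v -> cobound (@Sm R n) v = 0.
Proof.
move=> Hs; have HD := hs_HD Hs.
rewrite /cobound.
have e i : Sm (omit i v) = (2 ^+ n.+1)^-1 * 2^-1 *
    \sum_(t : {ffun 'I_n.+2 -> bool}) Ssimp (omit i (fun x => sgnb (t x) *: v x)).
  rewrite /Sm -mulrA; congr (_ * _).
  have := fiber_sum i (fun s => Ssimp (fun k => (if s k then -1 else 1) *: omit i v k)).
  have -> : \sum_(t : {ffun 'I_n.+2 -> bool})
      Ssimp (fun k => (if [ffun k0 => t (lift i k0)] k then -1 else 1) *: omit i v k) =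
    \sum_(t : {ffun 'I_n.+2 -> bool}) Ssimp (omit i (fun x => sgnb (t x) *: v x)).
    apply: eq_bigr => t _; congr Ssimp; apply: functional_extensionality => k.
    by rewrite ffunE.
  move=> ->; rewrite mulrA mulVf ?mul1r //.
  by rewrite pnatr_eq0.
under eq_bigr => i _ do rewrite e mulrCA.
rewrite -mulr_sumr.
under eq_bigr => i _ do rewrite mulr_sumr.
rewrite exchange_big /= big1 ?mulr0 // => t _.
exact: dS_zero (HD_sign t HD).
Qed.

End Aux.

Theorem lemma8p2 (R : realFieldType) (n : nat) (hn : ~~ odd n) :
  (forall (v : 'I_n.+1 -> 'cV[R]_n) (c : 'I_n.+1 -> R),
      (forall i, v i != 0) -> (forall i, c i != 0) ->
      Sm (fun i => c i *: v i) = Sm v) /\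
  (forall (g : 'M[R]_n) (v : 'I_n.+1 -> 'cV[R]_n), g \in unitmx ->
      Sm (fun i => g *m v i) = Num.sg (\det g) * Sm v) /\
  (forall v : 'I_n.+2 -> 'cV[R]_n,
      hereditarily_spanning v -> cobound (@Sm R n) v = 0).
Proof.
split; first by move=> v c _ hc; exact: Sm_scale.
split; first by move=> g v gu; exact: Sm_lin.
exact: dSm_zero.
Qed.
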